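(* Let $m\mathcal{M}$ be the maximal matching feature. Then for every weighted graph $(G,f)$ one has $\sigma^{m\mathcal{M}}_{(G,f)}=\varrho^{m\mathcal{M}}_{(G,f)}$, and the generator $\sigma^{m\mathcal{M}}=\varrho^{m\mathcal{M}}$ is balanced: for every graph $G=(V,E)$, every two filtering functions $f,g:E\to\mathbb{R}$ and every $h>0$ with $\sup_{e\in E}|f(e)-g(e)|\le h$, $\sigma^{m\mathcal{M}}_{(G,f)}(u-h,v+h)\le\sigma^{m\mathcal{M}}_{(G,g)}(u,v)$ for all $(u,v)\in\Delta^+$.
   Context: Graphs are finite simple undirected graphs; a weighted graph is $(G,f)$ with $G=(V,E)$, $f:E\to\mathbb{R}$. For $u\in\mathbb{R}$, $G_u=(V_u,E_u)$ is the subgraph induced by the edge set $f^{-1}((-\infty,u])$ (vertices: endpoints of these edges), $G_{+\infty}=G$. $\Delta^+=\{(u,v)\in\mathbb{R}\times(\mathbb{R}\cup\{+\infty\}):u<v\}$, with $+\infty+h=+\infty$. A feature assigns to every graph $H=(V_H,E_H)$ a function $2^{V_H\cup E_H}\to\{true,false\}$. The matching feature $\mathcal{M}$ is true on $X$ iff $X$ is a set of edges of $H$ no two of which share a vertex. The maximal feature $m\mathcal{F}$ of a feature $\mathcal{F}$ is: $m\mathcal{F}(X)=true$ in $H$ iff $\mathcal{F}(X)=true$ in $H$ and there is no $Y\subseteq V_H\cup E_H$ with $X\subsetneq Y$ and $\mathcal{F}(Y)=true$. Thus $m\mathcal{M}$ is true exactly on maximal matchings. For a feature $\mathcal{F}$: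 $X\subseteq V\cup E$ is an $\mathcal{F}$-set at level $w$ if $X\subseteq V_w\cup E_w$ and $\mathcal{F}(X)=true$ in $G_w$; a steady $\mathcal{F}$-set at $(u,v)\in\Delta^+$ if it is an $\mathcal{F}$-set at all levels $w\in[u,v]$; a ranging $\mathcal{F}$-set at $(u,v)$ if it is an $\mathcal{F}$-set at some level $w\le u$ and at some level $w'\ge v$. $\sigma^{\mathcal{F}}_{(G,f)}(u,v)$ and $\varrho^{\mathcal{F}}_{(G,f)}(u,v)$ are the numbers of steady, resp. ranging, $\mathcal{F}$-sets at $(u,v)$. *)

(* Defs.v *)
From HB Require Import structures.
From mathcomp Require Import all_boot all_order all_algebra.
From mathcomp Require Import boolp reals.
Set Implicit Arguments. Unset Strict Implicit. Unset Printing Implicit Defensive.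
Import Order.TTheory GRing.Theory Num.Theory.
Local Open Scope ring_scope.

(* A finite simple graph G = (V, E): vertex type V, edge type E, and each edge
   e has a set of endpoints [ends e] of size 2; [ends] injective (no multi-edges). *)

Inductive lev (R : Type) := Fin of R | PInf.
Arguments PInf {R}.

Definition lev_le (R : realType) (a b : lev R) : Prop :=
  match a, b with
  | Fin x, Fin y => x <= y
  | _, PInf => True
  | PInf, Fin _ => False
  end.

Definition lev_add (R : realType) (a : lev R) (h : R) : lev R :=
  match a with Fin x => Fin (x + h) | PInf => PInf end.

Section Graphs.
Variables (R : realType) (V E : finType) (ends : E -> {set V}).

(* A (sub)graph H = (VH, EH) of G is given by its vertex and edge sets.
   A feature assigns to H a predicate on subsets of V_H u E_H, which we
   represent as subsets of V + E (the disjoint union of vertices and edges). *)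
Definition feature := {set V} -> {set E} -> {set (V + E)} -> Prop.

Definition elems (VH : {set V}) (EH : {set E}) : {set (V + E)} :=
  [set x | match x with inl v => v \in VH | inr e => e \in EH end].

Definition matching_feature : feature := fun VH EH X =>
  (forall x, x \in X -> exists2 e, x = inr e & e \in EH) /\
  (forall e1 e2, inr e1 \in X -> inr e2 \in X -> e1 <> e2 ->
     [disjoint ends e1 & ends e2]).

Definition maximal_feature (F : feature) : feature := fun VH EH X =>
  F VH EH X /\
  ~ (exists Y : {set (V + E)},
       Y \subset elems VH EH /\ X \proper Y /\ F VH EH Y).

Definition Elev (f : E -> R) (w : lev R) : {set E} :=
  match w with Fin u => [set e | f e <= u] | PInf => setT end.

Definition Vlev (f : E -> R) (w : lev R) : {set V} :=
  match w with
  | Fin u => \bigcup_(e in Elev f (Fin u)) ends e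
  | PInf => setT
  end.

Definition Fset_at (F : feature) (f : E -> R) (w : lev R) (X : {set (V + E)}) :=
  X \subset elems (Vlev f w) (Elev f w) /\ F (Vlev f w) (Elev f w) X.

Definition steady (F : feature) (f : E -> R) (u : R) (v : lev R) X :=
  forall w : lev R, lev_le (Fin u) w -> lev_le w v -> Fset_at F f w X.

Definition ranging (F : feature) (f : E -> R) (u : R) (v : lev R) X :=
  (exists w : lev R, lev_le w (Fin u) /\ Fset_at F f w X) /\
  (exists w' : lev R, lev_le v w' /\ Fset_at F f w' X).

Definition sigmaF (F : feature) (f : E -> R) (u : R) (v : lev R) : nat :=
  #|[set X : {set (V + E)} | `[< steady F f u v X >]]|.

Definition rhoF (F : feature) (f : E -> R) (u : R) (v : lev R) : nat :=
  #|[set X : {set (V + E)} | `[< ranging F f u v X >]]|.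

End Graphs.

(* Main.v *)
Require Import Defs.
From HB Require Import structures.
From mathcomp Require Import all_boot all_order all_algebra.
From mathcomp Require Import boolp reals.
From mathcomp Require Import lra.
Import Order.TTheory GRing.Theory Num.Theory.
Local Open Scope ring_scope.

Lemma mm_sandwich (V E : finType) (ends : E -> {set V})
  (V1 V2 V3 : {set V}) (E1 E2 E3 : {set E}) (X : {set (V + E)}) :
  E1 \subset E2 -> E2 \subset E3 -> V2 \subset V3 ->
  X \subset elems V1 E1 /\ maximal_feature (matching_feature ends) V1 E1 X ->
  X \subset elems V3 E3 /\ maximal_feature (matching_feature ends) V3 E3 X ->
  X \subset elems V2 E2 /\ maximal_feature (matching_feature ends) V2 E2 X.
Proof.
move=> s12 s23 sV [_ [[H1 H2] _]] [_ [_ Hmax]].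
have HX : forall x, x \in X -> exists2 e, x = inr e & e \in E2.
  move=> x /H1 [e -> He]; exists e => //; exact: (subsetP s12).
split.
  apply/subsetP => x /HX [e -> He]; by rewrite inE.
split; first by split.
move=> [Y [sY [pXY [HY1 HY2]]]]; apply: Hmax; exists Y; split.
  apply/subsetP => y /(subsetP sY); rewrite !inE; case: y => [v|e].
    exact: (subsetP sV).
  exact: (subsetP s23).
split => //; split => // y /HY1 [e -> He]; exists e => //; exact: (subsetP s23).
Qed.
Arguments mm_sandwich {V E ends V1 V2 V3 E1 E2 E3 X}.

Lemma Vlev_mono (R : realType) (V E : finType) (ends : E -> {set V})
  (f g : E -> R) (a b : lev R) :
  Elev f a \subset Elev g b -> (a = PInf -> b = PInf) ->
  Vlev ends f a \subset Vlev ends g b.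
Proof.
case: b => [y|] sE Hab; last exact: subsetT.
case: a sE Hab => [x|] sE Hab; last by have := Hab erefl.
apply/bigcupsP => e He; apply: (bigcup_max e) => //; exact: (subsetP sE).
Qed.
Arguments Vlev_mono {R V E ends f g a b}.

Lemma Elev_mono (R : realType) (E : finType) (f : E -> R) (a b : lev R) :
  lev_le a b -> Elev f a \subset Elev f b.
Proof.
case: b => [y|] Hab; last exact: subsetT.
case: a Hab => [x|] //= Hxy; apply/subsetP => e; rewrite !inE => He.
exact: le_trans He Hxy.
Qed.
Arguments Elev_mono {R E f a b}.

Lemma lev_le_PInf (R : realType) (a b : lev R) : lev_le a b -> a = PInf -> b = PInf.
Proof. by case: a; case: b. Qed.
Arguments lev_le_PInf {R a b}.

Lemma Fset_mid (R : realType) (V E : finType) (ends : E -> {set V}) (f : E -> R)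
  (a b c : lev R) X : lev_le a b -> lev_le b c ->
  Fset_at ends (maximal_feature (matching_feature ends)) f a X ->
  Fset_at ends (maximal_feature (matching_feature ends)) f c X ->
  Fset_at ends (maximal_feature (matching_feature ends)) f b X.
Proof.
move=> ab bc; rewrite /Fset_at => Ha Hc; apply: (mm_sandwich _ _ _ Ha Hc).
- exact: Elev_mono.
- exact: Elev_mono.
- apply: Vlev_mono; [exact: Elev_mono | exact: lev_le_PInf].
Qed.
Arguments Fset_mid {R V E ends f a b c X}.

Lemma lev_le_trans (R : realType) (a b c : lev R) :
  lev_le a b -> lev_le b c -> lev_le a c.
Proof.
case: a => [x|]; case: b => [y|]; case: c => [z|] //=; exact: le_trans.
Qed.
Arguments lev_le_trans {R a b c}.

Theorem proposition5 (R : realType) (V E : finType) (ends : E -> {set V})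
  (ends2 : forall e, #|ends e| = 2%N) (ends_inj : injective ends) :
  (forall (f : E -> R) (u : R) (v : lev R), lev_le (Fin u) v /\ Fin u <> v ->
     sigmaF ends (maximal_feature (matching_feature ends)) f u v =
     rhoF ends (maximal_feature (matching_feature ends)) f u v) /\
  (forall (f g : E -> R) (h : R), 0 < h ->
     (forall e, `|f e - g e| <= h) ->
     forall (u : R) (v : lev R), lev_le (Fin u) v /\ Fin u <> v ->
       (sigmaF ends (maximal_feature (matching_feature ends)) f (u - h) (lev_add v h)
        <= sigmaF ends (maximal_feature (matching_feature ends)) g u v)%N).
Proof.
split.
  move=> f u v [uv _]; rewrite /sigmaF /rhoF; apply: eq_card => X.
  rewrite !inE; apply/asboolP/asboolP.
    move=> Hs; split.
      by exists (Fin u); split; [exact: lexx | apply: Hs => //; exact: lexx].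
    have vv : lev_le v v by case: v {Hs} uv => //= y _; exact: lexx.
    by exists v; split; last apply: Hs.
  move=> [[w [wu Hw]] [w' [vw' Hw']]] w'' uw'' w''v.
  apply: (Fset_mid (a := w) (c := w')) => //.
    exact: lev_le_trans wu uw''.
  exact: lev_le_trans w''v vw'.
move=> f g h h0 Hfg u v [uv _]; apply: subset_leq_card; apply/subsetP => X.
rewrite !inE => /asboolP Hs; apply/asboolP => w uw wv.
case: w uw wv => [x|] uw wv; last first.
  case: v Hs uv wv => // Hs _ _; exact: (Hs PInf I I).
have hx1 : (forall e, g e <= f e + h) /\ (forall e, f e <= g e + h).
  split=> e; have := Hfg e; rewrite ler_norml => /andP [a b].
    lra.
  lra.
case: hx1 => Hgf Hfg'.
have H1 : Fset_at ends (maximal_feature (matching_feature ends)) f (Fin (x - h)) X.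
  apply: (Hs) => /=; first by move: uw => /= uw; lra.
  case: v uv wv {Hs} => //= y _ xy; lra.
have H3 : Fset_at ends (maximal_feature (matching_feature ends)) f (Fin (x + h)) X.
  apply: (Hs) => /=; first by move: uw => /= uw; lra.
  case: v uv wv {Hs} H1 => //= y _ xy _; lra.
have s12 : Elev f (Fin (x - h)) \subset Elev g (Fin x).
  apply/subsetP => e; rewrite !inE => He; apply: le_trans (Hgf e) _.
  lra.
have s23 : Elev g (Fin x) \subset Elev f (Fin (x + h)).
  apply/subsetP => e; rewrite !inE => He; apply: le_trans (Hfg' e) _.
  lra.
apply: (mm_sandwich s12 s23 _ H1 H3).
exact: Vlev_mono.
Qed.
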